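(* Let $\ell$ be a positive integer, let $G$ be a graph, let $P$ be a path in $G$ with endvertices $u,v$, and let $(Q_1,\ldots,Q_r)$ be a tuple of $P$-paths in $G$, where $u_i,v_i$ denote the endvertices of $Q_i$ with $u_i<_Pv_i$, such that: (E1$'$) if $|i-j|>1$ then $Q_i$ and $Q_j$ are internally disjoint; (E2) the cycle $u_iPv_i\cup Q_i$ is short for every $i$; (E3) $u_1=u$ and $v_r=v$; (E4) $u_i<_Pu_{i+1}<_Pv_i<_Pv_{i+1}$ for $i=1,\ldots,r-1$. If every long cycle in $G$ has length at least $2\ell$, then there is a short path between $u$ and $v$ that is contained in $P\cup\bigcup_{j=1}^{r}Q_j$.
   Context: A path or cycle is short if its length (number of edges) is less than $\ell$; a cycle is long if its length is at least $\ell$. For a path $P$ with endvertices $u,v$, $\le_P$ denotes the total order on $V(P)$ given by distance from $u$ along $P$, and $xPy$ denotes the subpath of $P$ between $x,y\in V(P)$. For a subgraph $H$, an $H$-path is a path with two distinct endvertices in $H$ that is internally disjoint from $H$; a path of length $1$ between two vertices of $H$ is an $H$-path only if its edge is not in $E(H)$. *)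

(* Defs.v *)
(* A finite simple graph is a symmetric irreflexive relation
   e on a finType T; paths and cycles are vertex sequences. *)
From mathcomp Require Import all_boot.
Set Implicit Arguments. Unset Strict Implicit. Unset Printing Implicit Defensive.

Section Graphs.
Variables (T : finType) (e : rel T).

Definition is_path (p : seq T) : bool :=
  if p is x :: q then uniq p && path e x q else false.

Definition plen (p : seq T) : nat := (size p).-1.

Definition from_to (p : seq T) (a b : T) : bool :=
  if p is x :: q then (x == a) && (last x q == b) else false.

Definition has_ends (p : seq T) (a b : T) : bool := from_to p a b || from_to p b a.

Definition inner (p : seq T) : seq T :=
  if p is x :: q then behead (belast x q) else [::].

Definition pedge (p : seq T) (x y : T) : bool :=
  ((x, y) \in zip p (behead p)) || ((y, x) \in zip p (behead p)).

Definition is_Ppath (P Q : seq T) : bool :=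
  if Q is x :: q then
    [&& is_path Q, x \in P, last x q \in P, x != last x q,
        all (fun y => y \notin P) (inner Q) &
        (plen Q == 1) ==> ~~ pedge P x (last x q)]
  else false.

Definition int_disjoint (A B : seq T) : bool :=
  all (fun y => y \notin B) (inner A) && all (fun y => y \notin A) (inner B).

(* a cycle: at least 3 distinct vertices, cyclically adjacent; its length is size c *)
Definition is_cycle (c : seq T) : bool := [&& uniq c, 2 < size c & cycle e c].

End Graphs.

(* Main.v *)
Require Import Defs.
From mathcomp Require Import all_boot zify.
Set Implicit Arguments. Unset Strict Implicit. Unset Printing Implicit Defensive.

Ltac memtac := let H := fresh "H" in rewrite ?(inE, mem_cat, mem_rcons, mem_rev); intro H;
  rewrite ?(inE, mem_cat, mem_rcons, mem_rev); repeat (case/orP: H => H); by rewrite ?H ?orbT.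

Section Gen.
Variables (T : finType) (e : rel T).
Hypothesis esym : symmetric e.

Lemma split_first (p : pred T) s : has p s ->
  exists s1 a s2, [/\ s = s1 ++ a :: s2, p a & all (predC p) s1].
Proof.
elim: s => [|x s IH] //=; case: (boolP (p x)) => px /=.
  by move=> _; exists [::], x, s.
move=> /IH [s1 [a [s2 [-> pa al]]]]; exists (x :: s1), a, s2; split => //=.
by rewrite px al.
Qed.

Lemma split_last (p : pred T) s : has p s ->
  exists s1 a s2, [/\ s = s1 ++ a :: s2, p a & all (predC p) s2].
Proof.
rewrite -has_rev => /split_first [s1 [a [s2 [Hs pa al]]]].
exists (rev s2), a, (rev s1); split => //; last by rewrite all_rev.
by rewrite -(revK s) Hs rev_cat rev_cons cat_rcons.
Qed.

Lemma rev_path_sym x p : path e x p -> path e (last x p) (rev (belast x p)).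
Proof.
rewrite rev_path; apply: sub_path => a b /=; by rewrite esym.
Qed.

Lemma arcs D a b u : uniq D -> cycle e D -> a \in D -> b \in D -> a != b -> u \in D ->
  exists t, [/\ path e a t, last a t = b, uniq (a :: t), {subset a :: t <= D} & u \in a :: t].
Proof.
move=> uD cD aD bD ab uDD.
case: (rot_to aD) => i w Hr.
have uw : uniq (a :: w) by rewrite -Hr rot_uniq.
have cw : cycle e (a :: w) by rewrite -Hr rot_cycle.
have memw : forall z, (z \in D) = (z \in a :: w) by move=> z; rewrite -Hr mem_rot.
have bw : b \in w by move: bD; rewrite memw inE eq_sym (negbTE ab).
case: (splitPr bw) uw cw memw => w1 w2 uw cw memw.
move: cw; rewrite /= rcons_cat /= cat_path /= => /and3P [p1 eb p2].
have uDD' := uDD; rewrite memw inE mem_cat inE in uDD'.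
case/orP: uDD' => [/eqP ->|/orP [uw1|/orP[/eqP ->|uw2]]].
- exists (rcons w1 b); split.
  + by rewrite rcons_path p1.
  + by rewrite last_rcons.
  + move: uw; rewrite -cats1 /= !mem_cat !cat_uniq /= !inE.
    move=> /and5P [H1 H2 H3 H4 H5]; rewrite H2 /= andbT; move: H1 H3; rewrite !negb_or.
    by move=> /and3P [-> -> _] /andP [-> _].
  + move=> z; rewrite memw; memtac.
  + by rewrite inE eqxx.
- exists (rcons w1 b); split.
  + by rewrite rcons_path p1.
  + by rewrite last_rcons.
  + move: uw; rewrite -cats1 /= !mem_cat !cat_uniq /= !inE.
    move=> /and5P [H1 H2 H3 H4 H5]; rewrite H2 /= andbT; move: H1 H3; rewrite !negb_or.
    by move=> /and3P [-> -> _] /andP [-> _].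
  + move=> z; rewrite memw; memtac.
  + by rewrite inE mem_rcons inE uw1 !orbT.
- exists (rcons w1 b); split.
  + by rewrite rcons_path p1.
  + by rewrite last_rcons.
  + move: uw; rewrite -cats1 /= !mem_cat !cat_uniq /= !inE.
    move=> /and5P [H1 H2 H3 H4 H5]; rewrite H2 /= andbT; move: H1 H3; rewrite !negb_or.
    by move=> /and3P [-> -> _] /andP [-> _].
  + move=> z; rewrite memw; memtac.
  + by rewrite inE mem_rcons inE eqxx !orbT.
- exists (rcons (rev w2) b); split.
  + have := rev_path_sym p2; by rewrite last_rcons belast_rcons rev_cons.
  + by rewrite last_rcons.
  + suff : uniq (rev (b :: rcons w2 a)) by rewrite rev_cons rev_rcons.
    rewrite rev_uniq; move: uw; rewrite /= mem_rcons !inE rcons_uniq mem_cat !inE cat_uniq /=.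
    rewrite !negb_or => /and5P [/and3P [_ Hab Haw] _ _ Hbw Huw].
    by rewrite eq_sym Hab Hbw Haw Huw.
  + move=> z; rewrite memw; memtac.
  + by rewrite inE mem_rcons inE mem_rev uw2 !orbT.
Qed.


Lemma merge D v s u x y :
  uniq D -> cycle e D -> uniq (v :: s) -> cycle e (v :: s) -> v \notin D -> u \in D ->
  x \in s -> y \in s -> x \in D -> y \in D -> x != y ->
  exists X, [/\ uniq X, cycle e X, 2 < size X, [/\ u \in X, v \in X & last v s \in X] &
    forall z, z \in X -> (z \in D) || (z \in v :: s)].
Proof.
move=> uD cD uC cC vD uDD xs ys xD yD xy.
have hs : has (fun z => z \in D) s by apply/hasP; exists x.
case: (split_first hs) => s1 [a [s' [Es aD s1D]]].
have notin1 : forall z, z \in D -> z \in s -> z \in a :: s'.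
  move=> z zD; rewrite Es mem_cat => /orP [zs1|//].
  by move: (allP s1D z zs1); rewrite /= zD.
have hs' : has (fun z => z \in D) s'.
  case: (eqVneq x a) => [xa|xa].
  - have := notin1 y yD ys; rewrite inE -xa eq_sym (negbTE xy) /= => ys'.
    by apply/hasP; exists y.
  - have := notin1 x xD xs; rewrite inE (negbTE xa) /= => xs'.
    by apply/hasP; exists x.
case: (split_last hs') => s3 [b [s4 [Es' bD s4D]]].
subst s s'.
have ab : a != b.
  move: uC; rewrite /= cat_uniq /= mem_cat /= => /andP [_ /and3P [_ _ /andP [H _]]].
  by apply: contraNneq H => ->; rewrite mem_cat inE eqxx orbT.
have [t [pt lt ut tD ut']] := arcs uD cD aD bD ab uDD.
move: cC; rewrite /= rcons_cat cat_path /= rcons_cat cat_path /= => /and4P [p1 e1 _ p2].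
move: p2 => /andP [e2 p2].
rewrite rcons_path in p2; case/andP: p2 => p2 e3.
have bt : b \in t.
  move: ab; rewrite -lt; case: (t) => [|z t'] /=; first by rewrite eqxx.
  by move=> _; apply: mem_last.
exists ((a :: t) ++ s4 ++ v :: s1); split.
- rewrite cat_uniq ut /=; apply/andP; split.
    apply/hasPn => z; rewrite mem_cat inE => H; apply/negP => /tD zD.
    case/or3P: H => [H|/eqP H|H].
    + by move: (allP s4D z H); rewrite /= zD.
    + by move: vD; rewrite -H zD.
    + by move: (allP s1D z H); rewrite /= zD.
  rewrite uniq_catC; apply: subseq_uniq uC; rewrite -cat_cons.
  apply: (@cat_subseq _ (v :: s1) s4 (v :: s1) ((a :: s3) ++ b :: s4)) => //.
  exact: subseq_trans (suffix_subseq [:: b] s4) (suffix_subseq _ _).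
- rewrite /= rcons_cat cat_path pt lt /= rcons_cat cat_path p2 /= e3 /=.
  by rewrite rcons_path p1.
- by rewrite size_cat /= size_cat /=; case: (t) bt => //= ? ? _; rewrite !addnS.
- split.
 + by rewrite mem_cat ut'.
 + by rewrite !(mem_cat, inE) eqxx !orbT.
 + rewrite last_cat /= last_cat /=; case: (s4) bt => [|z4 s4'] /= bt.
    by rewrite inE mem_cat bt orbT.
    by rewrite inE mem_cat -cat_cons mem_cat mem_last !orbT.
- move=> z; rewrite mem_cat => /orP [/tD ->//|]; memtac.
Qed.


Lemma zip_mem_cat (A s : seq T) x y : (x, y) \in zip s (behead s) ->
  (x, y) \in zip (A ++ s) (behead (A ++ s)).
Proof.
elim: A => [|a A IH] //= H.
case Hs: (A ++ s) IH => [|z t] IH; first by move: H; case: (s) Hs => //; case: (A).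
by rewrite /= inE; apply/orP; right; exact: (IH H).
Qed.

Lemma pedge_infix (W A C : seq T) x y : W = A ++ x :: y :: C -> pedge W x y.
Proof. by move=> ->; rewrite /pedge zip_mem_cat //= inE eqxx. Qed.

Lemma infix_path (W A p B : seq T) x z : W = A ++ x :: p ++ B -> path e (head z W) (behead W) ->
  path (fun a b => e a b && pedge W a b) x p.
Proof.
move=> EW HW.
have Hp : path e x p.
  move: HW; rewrite EW; case: A EW => [|a A] EW /=; first by rewrite cat_path => /andP [].
  by rewrite cat_path => /andP [_ /= /andP [_]]; rewrite cat_path => /andP [].
have Hq : forall p' x' A', W = A' ++ x' :: p' ++ B -> path (fun a b => pedge W a b) x' p'.
  elim=> [|y p' IH] x' A' EA //=.
  rewrite (pedge_infix (A := A') (C := p' ++ B)) //=.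
  by apply: (IH y (rcons A' x')); rewrite cat_rcons.
have := Hq p x A EW; elim: p x {Hq EW HW} Hp => [|y p IH] x //= /andP [exy Hp] /andP [pxy Hq].
by rewrite exy pxy IH.
Qed.

Lemma path_zip_all (f : rel T) x p : path f x p -> all (fun xy => f xy.1 xy.2) (zip (x :: p) p).
Proof. by elim: p x => [|y p IH] x //= /andP [-> /IH]. Qed.

Lemma mem_zip (s t : seq T) x y : (x, y) \in zip s t -> x \in s /\ y \in t.
Proof.
elim: s t => [|a s IH] [|b t] //=; rewrite inE => /orP [/eqP [-> ->]|/IH [H1 H2]].
  by rewrite !inE !eqxx.
by rewrite !inE H1 H2 !orbT.
Qed.

Lemma pedge_mem (W : seq T) x y : pedge W x y -> x \in W.
Proof.
rewrite /pedge => /orP [H|H].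
  by move: (mem_zip H) => [].
by move: (mem_zip H) => [_ /mem_behead].
Qed.

Lemma split2 (Pp : seq T) x y : uniq Pp -> x \in Pp -> y \in Pp -> index x Pp < index y Pp ->
  exists P1 S P2, Pp = P1 ++ x :: S ++ y :: P2.
Proof.
move=> uP xP yP lt.
case: (splitPr xP) uP lt yP => P1 R uP.
rewrite cat_uniq /= in uP; case/and4P: uP => _ /norP [xP1 _] _ _.
rewrite !index_cat (negbTE xP1) /= eqxx addn0 mem_cat inE.
case: ifP => [yP1|_]; first by move=> H; have := index_mem y P1; rewrite yP1 => /(ltn_trans H); rewrite ltnn.
case: (eqVneq x y) => [->|xy]; first by rewrite ?eqxx addn0 ltnn.
move=> _ /= yR.
case: (splitPr yR) => S P2; by exists P1, S, P2.
Qed.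

Lemma idx_split (P1 M P2 : seq T) z : uniq (P1 ++ M ++ P2) -> z \in P1 ++ M ++ P2 ->
  (z \in M) = (size P1 <= index z (P1 ++ M ++ P2) < size P1 + size M).
Proof.
rewrite !cat_uniq => /and4P [_ H1 _ /andP [H2 _]] zP.
rewrite !index_cat; case: ifP => zP1.
  have : z \notin M.
    by apply: contra H1 => zM; apply/hasP; exists z => //; rewrite mem_cat zM.
  move/negbTE => ->; have := index_mem z P1; rewrite zP1 => H; symmetry; apply/negbTE; rewrite negb_and; apply/orP; left.
  by rewrite -ltnNge H.
case: ifP => zM.
  by rewrite leq_addr /= ltn_add2l index_mem zM.
by rewrite leq_addr /= ltn_add2l ltnNge leq_addr.
Qed.

Lemma orient (W : seq T) a b : uniq W -> path e (head a W) (behead W) -> has_ends W a b -> a != b ->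
  exists m, [/\ path e b (rcons m a), uniq (b :: rcons m a), {subset m <= inner W}
     & size m + 1 = plen W].
Proof.
case: W => [|w0 w] // uW pW.
rewrite /has_ends /= => /orP [/andP [/eqP Ew0 /eqP Ewl]|/andP [/eqP Ew0 /eqP Ewl]] ab; subst w0.
- case/lastP: w uW pW Ewl => [|m' b'] uW pW; first by move=> /= Eab; move: ab; rewrite Eab eqxx.
  rewrite last_rcons => Eb; subst b'.
  exists (rev m'); split.
  + by have := rev_path_sym pW; rewrite last_rcons belast_rcons rev_cons.
  + suff : uniq (rev (a :: rcons m' b)) by rewrite rev_cons rev_rcons.
    by rewrite rev_uniq.
  + by move=> z; rewrite mem_rev /inner belast_rcons.
  + by rewrite size_rev /plen /= size_rcons addn1.
- case/lastP: w uW pW Ewl => [|m' a'] uW pW; first by move=> /= Eab; move: ab; rewrite Eab eqxx.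
  rewrite last_rcons => Ea; subst a'.
  exists m'; split => //.
  + by move=> z; rewrite /inner belast_rcons.
  + by rewrite /plen /= size_rcons addn1.
Qed.

End Gen.

Lemma card_merge (T : finType) (X D C : seq T) x y : uniq X ->
  (forall z, z \in X -> (z \in D) || (z \in C)) -> x \in D -> x \in C -> y \in D -> y \in C ->
  x != y -> size X + 2 <= size D + size C.
Proof.
move=> uX sX xD xC yD yC xy.
have h1 : size X <= #|[predU D & C]|.
  by apply/card_geqP; exists X; split => // z /sX; rewrite !inE.
have h2 : 2 <= #|[predI D & C]|.
  apply/card_geqP; exists [:: x; y]; split => //; first by rewrite /= inE xy.
  by move=> z; rewrite !inE => /orP [] /eqP ->; rewrite ?xD ?xC ?yD ?yC.
have := cardUI (mem D) (mem C); have := card_size D; have := card_size C.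
move: h1 h2; move: #|[predU D & C]| #|[predI D & C]| #|D| #|C| (size X) (size D) (size C).
move=> a b c d f g h; lia.
Qed.
Lemma ar1 a b c l : c + b + 1 - c + (a + 1) < l -> (a + b.+1).+1 < l.
Proof. lia. Qed.
Lemma ar2 a b z : a <= z -> z <= a + b + 1 -> a <= z < a + b.+2.
Proof. lia. Qed.
Lemma ar3 a b : a <= a + b + 1.
Proof. lia. Qed.
Lemma ar4 a b z : a <= z < a + b.+2 -> z <= a + b + 1.
Proof. lia. Qed.

Lemma ar5 x d c l : x + 2 <= d + c -> d < l -> c < l -> 2 * l <= x -> False.
Proof. lia. Qed.

Section Main.
Variables (T : finType) (e : rel T) (l : nat) (P : seq T) (u v : T) (r : nat)
  (Q : nat -> seq T) (us vs : nat -> T).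
Hypothesis esym : symmetric e.
Hypothesis Ppath : is_path e P.
Hypothesis HQ : forall i, 1 <= i <= r ->
  [/\ is_Ppath e P (Q i), has_ends (Q i) (us i) (vs i) & index (us i) P < index (vs i) P].
Hypothesis HE2 : forall i, 1 <= i <= r -> (index (vs i) P - index (us i) P) + plen (Q i) < l.
Hypothesis Hu1 : us 1 = u.
Hypothesis Hvr : vs r = v.
Hypothesis HE4 : forall i, 1 <= i < r ->
  [/\ index (us i) P < index (us i.+1) P, index (us i.+1) P < index (vs i) P &
       index (vs i) P < index (vs i.+1) P].
Hypothesis Hlong : forall c, is_cycle e c -> l <= size c -> 2 * l <= size c.

Definition e2 : rel T := fun x y =>
  e x y && (pedge P x y || has (fun j => pedge (Q j) x y) (iota 1 r)).

Lemma e2sym : symmetric e2.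
Proof.
move=> x y; rewrite /e2 esym /pedge; congr (_ && _); congr (_ || _); first by rewrite orbC.
by apply: eq_has => j; rewrite orbC.
Qed.

Lemma e2e : subrel e2 e. Proof. by move=> x y /andP []. Qed.

Lemma uP : uniq P. Proof. by move: Ppath; case: (P) => // ? ? /andP []. Qed.

Lemma Ppath' z : path e (head z P) (behead P).
Proof. by move: Ppath; case: (P) => // ? ? /andP []. Qed.

Lemma QP i : 1 <= i <= r -> exists x q, [/\ Q i = x :: q, uniq (x :: q) && path e x q,
   x \in P, last x q \in P & all (fun y => y \notin P) (inner (x :: q))].
Proof.
case/HQ => HP _ _; move: HP; rewrite /is_Ppath; case: (Q i) => // x q.
case/andP => /andP [uq pq] /andP [xP /andP [lP /andP [_ /andP [al _]]]].
by exists x, q; rewrite uq pq.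
Qed.

Lemma ends_in i : 1 <= i <= r -> us i \in P /\ vs i \in P.
Proof.
move=> hi; have [x [q [Eq _ xP lP _]]] := QP hi.
have [_ He _] := HQ hi; move: He; rewrite Eq /has_ends /=.
by case/orP => /andP [/eqP <- /eqP <-].
Qed.

Lemma Qe2 i : 1 <= i <= r -> path e2 (head (us i) (Q i)) (behead (Q i)).
Proof.
move=> hi; have [x [q [Eq /andP [_ pq] _ _ _]]] := QP hi.
rewrite Eq /=.
have := @infix_path T e (Q i) [::] q [::] x x; rewrite Eq cats0 /= => /(_ erefl pq).
apply: sub_path => a b /andP [eab pab]; rewrite /e2 eab /=; apply/orP; right.
apply/hasP; exists i; first by rewrite mem_iota; case/andP: hi => h1 h2; rewrite h1 /= add1n ltnS.
by rewrite Eq.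
Qed.

Local Notation idx z := (index z P).

Lemma Ci i : 1 <= i <= r -> exists s, [/\ uniq (vs i :: s), cycle e2 (vs i :: s),
  size (vs i :: s) < l, us i \in s &
  [/\ last (vs i) s \in P, (idx (last (vs i) s)).+1 = idx (vs i),
      forall z, z \in P -> idx (us i) <= idx z <= idx (vs i) -> z \in vs i :: s &
      forall z, z \in vs i :: s -> z \in P -> idx z <= idx (vs i)]].
Proof.
move=> hi; have [HPp He Hlt] := HQ hi.
have [uiP viP] := ends_in hi.
have [P1 [S [P2 EP]]] := split2 uP uiP viP Hlt.
have [x [q [Eq /andP [uq pq] xP lP al]]] := QP hi.
have uv : us i != vs i by apply: contraTneq Hlt => ->; rewrite ltnn.
have [m [pm um sm szm]] := orient e2sym (W := Q i) (a := us i) (b := vs i)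
   (ltac:(by rewrite Eq)) (Qe2 hi) He uv.
set ui := us i in uv Hlt uiP EP pm um sm szm *.
set vi := vs i in uv Hlt viP EP pm um sm szm *.
have mP : forall z, z \in m -> z \notin P.
  by move=> z /sm; rewrite Eq => /(allP al).
have uP' := uP; rewrite EP in uP'.
have EP' : P = P1 ++ (ui :: rcons S vi) ++ P2 by rewrite EP cat_cons cat_rcons.
have uP'' := uP; rewrite EP' in uP''.
have nP1 : forall z, z \in ui :: S ++ vi :: P2 -> z \notin P1.
  move: uP'; rewrite cat_uniq => /and3P [_ H _] z zin.
  by apply: contra H => zP1; apply/hasP; exists z.
have uS : uniq (ui :: S ++ vi :: P2) by move: uP'; rewrite cat_uniq => /and3P [_ _ ->].
have viS : vi \notin S.
  move: uS; rewrite cons_uniq => /andP [_]; rewrite cat_uniq => /and3P [_ /hasPn H _].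
  by have := H vi; rewrite inE eqxx => /(_ isT).
have uiS : uniq (ui :: S).
  exact: subseq_uniq (prefix_subseq (ui :: S) (vi :: P2)) uS.
have iu : idx ui = size P1.
  by rewrite EP index_cat (negbTE (nP1 ui _)) ?inE ?eqxx //= eqxx addn0.
have iv : idx vi = size P1 + size S + 1.
  rewrite EP index_cat (negbTE (nP1 vi _)) ?inE ?mem_cat ?inE ?eqxx ?orbT //=.
  by rewrite (negbTE uv) index_cat (negbTE viS) /= eqxx addn0 addn1 addnS.
exists (m ++ ui :: S); split.
- rewrite cons_uniq mem_cat negb_or inE negb_or eq_sym uv viS andbT.
  move: um; rewrite cons_uniq mem_rcons inE negb_or rcons_uniq => /andP [/andP [_ ->] /andP [_ um']].
  rewrite /= cat_uniq um' uiS andbT; apply/hasPn => z zin; apply/negP => zm.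
  have := mP z zm; rewrite EP mem_cat -cat_cons mem_cat zin orbT /=.
  by [].
- rewrite /= rcons_cat cat_path /=.
  move: pm; rewrite rcons_path => /andP [-> ->] /=.
  have := @infix_path T e P P1 (rcons S vi) P2 ui ui EP' (Ppath' ui).
  by apply: sub_path => a b /andP [eab pab]; rewrite /e2 eab pab.
- rewrite /= size_cat /=; have := HE2 hi; rewrite -/ui -/vi iu iv -szm; exact: ar1.
- by rewrite mem_cat inE eqxx orbT.
split.
- rewrite last_cat /= EP mem_cat; apply/orP; right.
  by rewrite -cat_cons mem_cat mem_last.
- rewrite iv last_cat /= EP index_cat (negbTE (nP1 (last ui S) _)); last first.
    by rewrite -cat_cons mem_cat mem_last.
  by rewrite -cat_cons index_cat mem_last index_last // addn1.
- move=> z zP /andP [h1 h2].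
  have zM : z \in ui :: rcons S vi.
    rewrite (idx_split uP''); last by rewrite -EP'.
    rewrite -EP' /= size_rcons; rewrite iu iv in h1 h2; exact: ar2.
  rewrite inE mem_rcons inE in zM; case/or3P: zM => [/eqP->|/eqP->|zS].
  + by rewrite !(inE, mem_cat) eqxx ?orbT.
  + by rewrite !(inE, mem_cat) eqxx ?orbT.
  + by rewrite !(inE, mem_cat) zS ?orbT.
- move=> z; rewrite inE mem_cat inE => /or4P [/eqP ->|zm|/eqP ->|zS] zP.
  + by [].
  + by move: (mP z zm); rewrite zP.
  + by rewrite iu iv ar3.
  + have zM : z \in ui :: rcons S vi by rewrite inE mem_rcons inE zS !orbT.
    rewrite (idx_split uP'') in zM; last by rewrite -EP'.
    move: zM; rewrite -EP' /= size_rcons iv; exact: ar4.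
Qed.


Definition Inv i := exists D p, [/\ uniq D, cycle e2 D, size D < l,
  [/\ us 1 \in D, vs i \in D & p \in D] &
  [/\ p \in P, (idx p).+1 = idx (vs i) & forall z, z \in D -> z \in P -> idx z <= idx (vs i)]].

Lemma Inv1 : 0 < r -> Inv 1.
Proof.
move=> r0; have h1 : 1 <= 1 <= r by rewrite leqnn r0.
have [s [uC cC sC usC [lP il HCin HCout]]] := Ci h1.
exists (vs 1 :: s), (last (vs 1) s); split => //; split => //.
- by rewrite inE usC orbT.
- by rewrite inE eqxx.
- exact: mem_last.
Qed.

Lemma InvS i : 1 <= i < r -> Inv i -> Inv i.+1.
Proof.
move=> hi [D [p [uD cD sD [u1D viD pD] [pP ip HD]]]].
have hi0 : 1 <= i <= r by case/andP: hi => -> /ltnW.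
have hi1 : 1 <= i.+1 <= r by case/andP: hi => _ ->.
have [s [uC cC sC usC [lP il HCin HCout]]] := Ci hi1.
have [E1 E2 E3] := HE4 hi.
have [_ vi1P] := ends_in hi1.
have [_ viP] := ends_in hi0.
have vD : vs i.+1 \notin D.
  by apply/negP => H; have := HD _ H vi1P; rewrite leqNgt E3.
have xC : vs i \in vs i.+1 :: s by apply: HCin => //; rewrite (ltnW E2) (ltnW E3).
have xs : vs i \in s.
  move: xC; rewrite inE => /orP [/eqP H|//]; by move: E3; rewrite H ltnn.
have pC : p \in vs i.+1 :: s.
  apply: HCin => //; apply/andP; split; first by rewrite -ltnS ip.
  by apply: ltnW; apply: leq_trans E3; rewrite -ip.
have ys : p \in s.
  move: pC; rewrite inE => /orP [/eqP H|//]; move: E3; rewrite -ip H.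
  by move=> /ltnW; rewrite ltnn.
have xy : vs i != p.
  by apply/negP => /eqP H; move: ip; rewrite H => /eqP; rewrite -(addn1 (idx p)) -{2}(addn0 (idx p)) eqn_add2l.
have [X [uX cX sX [u1X vX lX] subX]] := merge e2sym uD cD uC cC vD u1D xs ys viD pD xy.
exists X, (last (vs i.+1) s); split => //.
- case: (ltnP (size X) l) => // hl; exfalso.
  have cyc : is_cycle e X by rewrite /is_cycle uX sX (sub_cycle e2e cX).
  exact: (ar5 (card_merge uX subX viD xC pD pC xy) sD sC (Hlong cyc hl)).
split => // z zX zP; case/orP: (subX z zX) => H.
- exact: leq_trans (HD z H zP) (ltnW E3).
- exact: HCout.
Qed.

Lemma InvAll i : 0 < r -> 1 <= i <= r -> Inv i.
Proof.
move=> r0; elim: i => [|i IH] //; case: i IH => [|i] IH; first by move=> _; exact: Inv1.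
move=> /andP [_ hi]; apply: InvS; first by rewrite hi.
by apply: IH; rewrite /= (ltnW hi).
Qed.

Lemma vs_mono i : 1 <= i <= r -> idx (vs 1) <= idx (vs i).
Proof.
elim: i => [|i IH] //; case: i IH => [|i] IH //.
move=> /andP [_ hi]; have [_ _ E3] := HE4 (ltac:(by rewrite hi) : 1 <= i.+1 < r).
apply: leq_trans (IH _) (ltnW E3); by rewrite /= (ltnW hi).
Qed.

Lemma final : 0 < r ->
  exists R : seq T,
    [/\ is_path e R, from_to R u v, plen R < l,
        all (fun x => (x \in P) || has (fun j => x \in Q j) (iota 1 r)) R &
        all (fun xy => pedge P xy.1 xy.2 || has (fun j => pedge (Q j) xy.1 xy.2) (iota 1 r))
            (zip R (behead R))].
Proof.
move=> r0; have hr : 1 <= r <= r by rewrite r0 leqnn.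
have [D [p [uD cD sD [u1D vrD _] _]]] := InvAll r0 hr.
rewrite Hu1 in u1D; rewrite Hvr in vrD.
have uv : u != v.
  have h1 : 1 <= 1 <= r by rewrite leqnn r0.
  have [_ _ Hlt] := HQ h1.
  apply/negP => /eqP E; have := vs_mono hr; rewrite Hvr -E -Hu1 leqNgt Hlt.
  by [].
have [t [pt lt ut tD ut']] := arcs e2sym uD cD u1D vrD uv u1D.
exists (u :: t); split.
- by rewrite /is_path ut (sub_path e2e pt).
- by rewrite /from_to eqxx lt eqxx.
- rewrite /plen /=; apply: ltnW; exact: leq_ltn_trans (uniq_leq_size ut tD) sD.
- apply/allP => z zt; have zD := tD z zt.
  have := next_cycle cD zD; case/andP => _ /orP [H|/hasP [j jin H]].
  + by rewrite (pedge_mem H).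
  + by apply/orP; right; apply/hasP; exists j => //; apply: pedge_mem H.
- apply: sub_all (path_zip_all pt) => [[a b]] /= /andP [_ H]; exact: H.
Qed.

End Main.

Theorem lemma4 (T : finType) (e : rel T) (e_sym : symmetric e) (e_irr : irreflexive e)
  (l : nat) (l_pos : 0 < l)
  (P : seq T) (u v : T) (r : nat) (Q : nat -> seq T) (us vs : nat -> T) :
  is_path e P -> from_to P u v ->
  0 < r ->
  (* each Q_i is a P-path with endvertices u_i, v_i, u_i <_P v_i *)
  (forall i, 1 <= i <= r ->
     [/\ is_Ppath e P (Q i), has_ends (Q i) (us i) (vs i) &
         index (us i) P < index (vs i) P]) ->
  (* (E1') *)
  (forall i j, 1 <= i <= r -> 1 <= j <= r -> (1 < i - j) || (1 < j - i) ->
     int_disjoint (Q i) (Q j)) ->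
  (* (E2): the cycle u_i P v_i + Q_i is short *)
  (forall i, 1 <= i <= r ->
     (index (vs i) P - index (us i) P) + plen (Q i) < l) ->
  (* (E3) *)
  us 1 = u -> vs r = v ->
  (* (E4) *)
  (forall i, 1 <= i < r ->
     [/\ index (us i) P < index (us i.+1) P,
         index (us i.+1) P < index (vs i) P &
         index (vs i) P < index (vs i.+1) P]) ->
  (* every long cycle has length at least 2l *)
  (forall c, is_cycle e c -> l <= size c -> 2 * l <= size c) ->
  exists R : seq T,
    [/\ is_path e R, from_to R u v, plen R < l,
        all (fun x => (x \in P) || has (fun j => x \in Q j) (iota 1 r)) R &
        all (fun xy => pedge P xy.1 xy.2 || has (fun j => pedge (Q j) xy.1 xy.2) (iota 1 r))
            (zip R (behead R))].
Proof.
move=> Ppath Hfrom r0 HQ HE1 HE2 Hu1 Hvr HE4 Hlong.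
exact: (final e_sym Ppath HQ HE2 Hu1 Hvr HE4 Hlong r0).
Qed.
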